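(* Let $n\in\mathbf{N}$, let $A\subset[n]$ have property P, let $k,a,q$ be positive integers and $0\leqslant\alpha\leqslant1$. Let $B$ be a finite set such that every element of $k\cdot B$ is a positive integer which is an integer multiple of some element of $A\cap[1,\alpha n]$, every element of $k\cdot B$ is congruent to $a$ modulo $q$, and $k\cdot B\subset I$ for some interval of integers $I$. Then $$|B|+\left|\left(A_{(\alpha,1]}+A_{(\alpha,1]}\right)\cap I\cap(a+q\mathbf{N})\right|<\frac{|I|}{q}+1.$$
   Context: A set $A\subset\mathbf{N}$ has property P if there are no $x,y,z\in A$ (not necessarily distinct $x,y$) with $z<x$, $z<y$ and $z\mid x+y$. For reals $0\le\alpha<\beta\le1$, $A_{(\alpha,\beta]}=A\cap(\alpha n,\beta n]$. $[\beta]=[1,\beta]\cap\mathbf{N}$; an interval means a set of consecutive integers. $k\cdot B=\{kb:b\in B\}$, $X+Y=\{x+y:x\in X,y\in Y\}$, $a+q\mathbf{N}=\{a+qm:m\in\mathbf{N}\}$. *)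

(* Defs.v *)
From HB Require Import structures.
From mathcomp Require Import all_boot all_order all_algebra.
From mathcomp Require Import finmap.
From mathcomp Require Import reals.
Set Implicit Arguments. Unset Strict Implicit. Unset Printing Implicit Defensive.
Import Order.TTheory GRing.Theory Num.Theory.
Local Open Scope fset_scope.

Definition propertyP (A : {fset nat}) : Prop :=
  forall x y z : nat, x \in A -> y \in A -> z \in A ->
    (z < x)%N -> (z < y)%N -> ~~ (z %| x + y)%N.

Definition Apart (R : realType) (A : {fset nat}) (alpha beta : R) (n : nat)
  : {fset nat} :=
  [fset x in A | (alpha * n%:R < x%:R)%R && (x%:R <= beta * n%:R)%R].

Definition sumset (X Y : {fset nat}) : {fset nat} :=
  [fset (x + y)%N | x in X, y in Y].

Definition inIntv (l : int) (len : nat) (s : int) : bool :=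
  (l <= s)%R && (s < l + len%:Z)%R.

(* membership in a + qN = {a + q m : m in N}, N = {0,1,2,...}:
   s = a + q m for some m >= 0, i.e. a <= s and q | s - a *)
Definition inAP (a q s : nat) : bool := (a <= s)%N && (q %| s - a)%N.

Definition sumsetIntvAP (X : {fset nat}) (l : int) (len : nat) (a q : nat)
  : {fset nat} :=
  [fset s in sumset X X | inIntv l len s%:Z && inAP a q s].

(* Main.v *)
Require Import Defs.
From HB Require Import structures.
From mathcomp Require Import all_boot all_order all_algebra.
From mathcomp Require Import finmap.
From mathcomp Require Import reals.
From mathcomp Require Import zify.
Import Order.TTheory GRing.Theory Num.Theory.
Local Open Scope fset_scope.

Lemma intv_nat (l : int) (len : nat) : exists m : nat,
  forall t : nat, inIntv l len t%:Z -> (m <= t < m + len)%N.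
Proof.
case: l => [m|j]; [exists m|exists 0%N] => t; rewrite /inIntv => /andP[h1 h2]; lia.
Qed.

Lemma count_bound (s : seq nat) (m len q r : nat) : (0 < q)%N -> uniq s ->
  (forall t, t \in s -> (m <= t < m + len)%N /\ t %% q = r) ->
  (size s <= (len + q - 1) %/ q)%N.
Proof.
move=> q0 us hs.
pose h t := ((t - m) %/ q)%N.
have hinj : {in s &, injective h}.
  move=> t t' /hs [h1 h2] /hs [h3 h4] e.
  have e1 : (t - m = t' - m %[mod q])%N.
    apply/eqP; rewrite -(eqn_modDl m) !subnKC; [|lia|lia].
    by rewrite h2 h4.
  have := divn_eq (t - m) q; rewrite e1 -/(h t) e -/(h t') -divn_eq; lia.
rewrite -(size_map h) -(size_iota 0 ((len + q - 1) %/ q)).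
apply: uniq_leq_size; first by rewrite map_inj_in_uniq.
move=> u /mapP [t /hs [h1 _] ->]; rewrite mem_iota /= add0n /h.
rewrite leq_divRL //.
have := leq_divM (t - m) q.
rewrite mulSn; lia.
Qed.

Theorem mainTheorem5 (R : realType) (n : nat) (A : {fset nat})
    (k a q : nat) (alpha : R) (B : {fset rat}) (l : int) (len : nat) :
  (forall x, x \in A -> (1 <= x <= n)%N) ->
  propertyP A ->
  (0 < k)%N -> (0 < a)%N -> (0 < q)%N ->
  (0 <= alpha)%R -> (alpha <= 1)%R ->
  (forall b, b \in B -> exists c : nat,
      (k%:R * b = c%:R :> rat)%R /\ (0 < c)%N /\
      (exists z : nat, z \in A /\ (1 <= z)%N /\ (z%:R <= alpha * n%:R)%R /\ (z %| c)%N) /\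
      c = a %[mod q] /\
      inIntv l len c%:Z) ->
  ((#|` B|%:R + #|` sumsetIntvAP (Apart A alpha 1 n) l len a q|%:R : R) < len%:R / q%:R + 1)%R.
Proof.
move=> hA hP k0 a0 q0 al0 al1 hB.
set S := sumsetIntvAP _ _ _ _ _.
pose g (b : rat) := `|numq (k%:R * b)%R|%N.
have hg : forall b, b \in B -> exists c : nat, [/\ g b = c,
      (k%:R * b = c%:R :> rat)%R,
      (exists z : nat, z \in A /\ (z%:R <= alpha * n%:R)%R /\ (z %| c)%N),
      c = a %[mod q] & inIntv l len c%:Z].
  move=> b /hB [c [e [c0 [[z [zA [z1 [zal zc]]]] [hm hi]]]]].
  exists c; split => //; last by exists z.
  by rewrite /g e (numq_int (Posz c)).
have [m hm] := intv_nat l len.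
pose s := map g B ++ S.
have us : uniq s.
  rewrite cat_uniq fset_uniq andbT map_inj_in_uniq ?fset_uniq //=; last first.
    move=> b b' /hg [c [gc e _ _ _]] /hg [c' [gc' e' _ _ _]] gbb.
    apply: (mulfI (x := (k%:R : rat))); first by rewrite pnatr_eq0 -lt0n.
    by rewrite e e' -gc -gc' gbb.
  apply/hasPn => w yS; apply/negP => /mapP [b bB wb].
  have [c [gc _ [z [zA [zal zc]]] _ _]] := hg b bB.
  move: yS; rewrite wb gc /S /sumsetIntvAP !inE /= => /andP [/imfset2P [x xX [y yX ey]] _].
  move: xX yX; rewrite !inE /= => /andP [xA /andP [xal _]] /andP [yA /andP [yal _]].
  have zx : (z < x)%N by rewrite -(ltr_nat R); exact: le_lt_trans zal xal.
  have zy : (z < y)%N by rewrite -(ltr_nat R); exact: le_lt_trans zal yal.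
  have := hP x y z xA yA zA zx zy; rewrite /= in ey; by rewrite -ey zc.
have hs : forall t, t \in s -> (m <= t < m + len)%N /\ t %% q = a %% q.
  move=> t; rewrite mem_cat => /orP [/mapP [b bB ->]|].
    have [c [gc _ _ hc hi]] := hg b bB.
    by rewrite gc; split => //; exact: hm.
  rewrite /S /sumsetIntvAP !inE /= => /andP [_ /andP [hi /andP [ha hq]]].
  split; first exact: hm.
  by apply/eqP; rewrite eqn_mod_dvd.
have := @count_bound s m len q (a %% q) q0 us hs.
rewrite size_cat size_map => hK.
Local Open Scope ring_scope.
rewrite -natrD.
apply: (le_lt_trans (y := (((len + q - 1) %/ q)%N)%:R)); first by rewrite ler_nat.
have -> : (len%:R / q%:R + 1 : R) = (len + q)%:R / q%:R.
  by rewrite natrD mulrDl divff // pnatr_eq0 -lt0n.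
rewrite ltr_pdivlMr ?ltr0n // -natrM ltr_nat.
have := leq_divM (len + q - 1) q.
lia.
Qed.
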